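(* For every positive integer $n$ and every string $u$ of length $n$ over a finite alphabet, the sum of the exponents of all runs in $u$ is less than $4.1\,n$.
   Context: For a word $u=u_1\cdots u_m$, the (shortest) period is the smallest positive integer $p$ with $u_i=u_{i+p}$ for all $1\le i\le m-p$; $u[i..j]=u_i\cdots u_j$. A run in $u$ is an interval $[i..j]$ such that the period $p$ of $u[i..j]$ satisfies $2p\le j-i+1$, and $u[i-1]\ne u[i+p-1]$ (or $i=1$) and $u[j-p+1]\ne u[j+1]$ (or $j=|u|$). Its exponent is $(j-i+1)/p$. *)

(* Defs.v *)
(* Words are sequences over a finite alphabet T : finType.
   Positions are 1-indexed as in the paper: u_k = letter u k. *)
From mathcomp Require Import all_boot all_order all_algebra.
Set Implicit Arguments. Unset Strict Implicit. Unset Printing Implicit Defensive.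
Import Order.TTheory GRing.Theory Num.Theory.

Section Words.
Variable T : eqType.

Definition letter (u : seq T) (k : nat) : option T :=
  if k == 0 then None else onth u k.-1.

(* u[i..j] = u_i ... u_j *)
Definition factor (u : seq T) (i j : nat) : seq T :=
  take (j.+1 - i) (drop i.-1 u).

Definition is_period (w : seq T) (p : nat) : bool :=
  (0 < p) && all (fun k => letter w k == letter w (k + p)) (iota 1 (size w - p)).

(* the (shortest) period: the smallest positive p that is a period of w
   (for nonempty w, p = |w| is always a period, so the search succeeds) *)
Definition per (w : seq T) : nat :=
  (find (is_period w) (iota 1 (size w))).+1.

Definition is_run (u : seq T) (i j : nat) : bool :=
  let p := per (factor u i j) in
  [&& 1 <= i, i <= j, j <= size u,
      2 * p <= j.+1 - i,
      (i == 1) || (letter u i.-1 != letter u (i + p).-1) &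
      (j == size u) || (letter u (j.+1 - p) != letter u j.+1)].

Definition run_exponent (u : seq T) (i j : nat) : rat :=
  ((j.+1 - i)%:R / (per (factor u i j))%:R)%R.

Definition sum_exponents (u : seq T) : rat :=
  (\sum_(i < (size u).+1) \sum_(j < (size u).+1 | is_run u i j)
      run_exponent u i j)%R.

End Words.

(* Main.v *)
Require Import Defs.
From mathcomp Require Import all_boot all_order all_algebra.
From mathcomp Require Import zify ring lra.
Import Order.TTheory GRing.Theory Num.Theory.

Module Helpers.
Set Implicit Arguments. Unset Strict Implicit. Unset Printing Implicit Defensive.

Section Lex.
Variable X : eqType.
Variable r : X -> X -> bool.
Hypothesis r_irr : forall x, r x x = false.
Hypothesis r_asym : forall x y, r x y -> r y x = false.
Hypothesis r_trans : forall x y z, r x y -> r y z -> r x z.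
Hypothesis r_total : forall x y, x != y -> r x y || r y x.

Fixpoint lexlt (s1 s2 : seq X) : bool :=
  match s1, s2 with
  | x :: s1', y :: s2' => r x y || (x == y) && lexlt s1' s2'
  | _, _ => false
  end.

Lemma lex_irr s : lexlt s s = false.
Proof. by elim: s => //= x s ->; rewrite r_irr andbF. Qed.

Lemma lex_asym s t : lexlt s t -> lexlt t s = false.
Proof.
elim: s t => [|x s IH] [|y t] //= /orP [H|/andP [/eqP <- H]].
  rewrite (r_asym H) /=; case: eqP => //= E; by rewrite E r_irr in H.
by rewrite r_irr eqxx (IH _ H).
Qed.

Lemma lex_trans s t w : lexlt s t -> lexlt t w -> lexlt s w.
Proof.
elim: s t w => [|x s IH] [|y t] [|z w] //= /orP [H|/andP [/eqP <- H]]
  /orP [H'|/andP [/eqP <- H']].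
- by rewrite (r_trans H H').
- by rewrite H.
- by rewrite H'.
- by rewrite eqxx (IH _ _ H H') orbT.
Qed.

Lemma lex_total s t : size s = size t -> s != t -> lexlt s t || lexlt t s.
Proof.
elim: s t => [|x s IH] [|y t] //= [Hs] Hne.
case: (eqVneq x y) => [E|Nxy].
  subst y; rewrite !r_irr /= ?eqxx /=; apply: IH => //.
  by apply: contra Hne => /eqP ->.
by case/orP: (r_total Nxy) => ->; rewrite ?orbT.
Qed.

Lemma lex_catl s a b : lexlt (s ++ a) (s ++ b) = lexlt a b.
Proof. by elim: s => //= x s ->; rewrite r_irr eqxx. Qed.

Lemma lex_catr s a b : size a = size b -> lexlt (a ++ s) (b ++ s) -> lexlt a b || (a == b).
Proof.
elim: a b => [|x a IH] [|y b] //= [Hs] /orP [->//|/andP [/eqP E H]].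
subst y; rewrite r_irr eqxx /=.
by case/orP: (IH _ Hs H) => [->|/eqP ->]; rewrite ?eqxx ?orbT.
Qed.

Lemma no_border s x z : size x = size z ->
  lexlt (s ++ z) (s ++ x) -> lexlt (x ++ s) (z ++ s) -> False.
Proof.
move=> Hs H1 H2; rewrite lex_catl in H1.
case/orP: (lex_catr Hs H2) => [H|/eqP E].
  by rewrite (lex_asym H1) in H.
by subst; rewrite lex_irr in H1.
Qed.

End Lex.

Section G.
Variable X : Type.
Definition G (f : nat -> X) L := map f (iota 0 L).

Lemma size_G f L : size (G f L) = L.
Proof. by rewrite size_map size_iota. Qed.

Lemma G_ext f g L : (forall t, t < L -> f t = g t) -> G f L = G g L.
Proof. move=> H; apply/eq_in_map => t; rewrite mem_iota add0n; exact: H. Qed.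

Lemma G_split f L m : m <= L -> G f L = G f m ++ G (fun t => f (m + t)) (L - m).
Proof.
move=> Hm; rewrite /G -{1}(subnKC Hm) iotaD map_cat add0n.
by congr (_ ++ _); rewrite -{1}(addn0 m) iotaDl -map_comp.
Qed.

Lemma G_S f L : G f L.+1 = f 0 :: G (fun t => f t.+1) L.
Proof. by rewrite /G /= -[1]/(1 + 0) iotaDl -map_comp. Qed.
End G.

Lemma lex_G (X : eqType) (r : X -> X -> bool) (f g : nat -> X) L t0 :
  (forall x, r x x = false) ->
  t0 < L -> (forall t, t < t0 -> f t = g t) -> r (f t0) (g t0) ->
  lexlt r (G f L) (G g L).
Proof.
move=> irr Ht0 Heq Hr.
rewrite (G_split f (ltnW Ht0)) (G_split g (ltnW Ht0)).
rewrite (G_ext (g := g) (L := t0)); last by move=> t /Heq.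
rewrite (lex_catl irr); have : 0 < L - t0 by rewrite subn_gt0.
case: (L - t0) => [|m] // _.
by rewrite !G_S /= !addn0 Hr.
Qed.

Section Word.
Variable T : finType.
Variable u : seq T.

Definition key (x : option T) : nat := if x is Some y then (enum_rank y).+1 else 0.
Lemma key_inj : injective key.
Proof.
move=> [x|] [y|] //= [] E; congr Some; exact: enum_rank_inj (val_inj E).
Qed.
Definition ltb (o : bool) (x y : option T) := if o then key y < key x else key x < key y.
Lemma ltb_irr o x : ltb o x x = false.
Proof. by rewrite /ltb; case: o; rewrite ltnn. Qed.
Lemma ltb_asym o x y : ltb o x y -> ltb o y x = false.
Proof. rewrite /ltb; case: o => H; apply/negbTE; rewrite -leqNgt ltnW //. Qed.
Lemma ltb_trans o x y z : ltb o x y -> ltb o y z -> ltb o x z.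
Proof. rewrite /ltb; case: o => H1 H2; exact: ltn_trans H2 H1 || exact: ltn_trans H1 H2. Qed.
Lemma ltb_total o x y : x != y -> ltb o x y || ltb o y x.
Proof.
move=> Hne; have : key x != key y by apply: contra Hne => /eqP /key_inj ->.
by rewrite /ltb neq_ltn; case: o => //; rewrite orbC.
Qed.
Lemma ltb_flip o x y : ltb (~~ o) x y = ltb o y x.
Proof. by case: o. Qed.

Definition a k := letter u k.

Lemma letter_factor i j t : 1 <= i -> 1 <= t <= j.+1 - i ->
  letter (factor u i j) t = a (i + t).-1.
Proof.
move=> Hi /andP [Ht1 Ht2].
rewrite /a /letter /factor.
have -> : (t == 0) = false by case: t Ht1 Ht2.
have -> : ((i + t).-1 == 0) = false by apply/eqP; lia.
rewrite !onthE map_take map_drop nth_take; last by case: t Ht1 Ht2 => // t; lia.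
rewrite nth_drop; congr nth; lia.
Qed.

Definition pp i j := per (factor u i j).

Lemma pp_gt0 i j : 0 < pp i j. Proof. by []. Qed.

Lemma size_factor i j : 1 <= i -> i <= j -> j <= size u -> size (factor u i j) = j.+1 - i.
Proof. case: i => // i _ *; rewrite /factor size_take size_drop /=; case: ltnP => //; lia. Qed.

Lemma pp_period i j : 1 <= i -> i <= j -> j <= size u ->
  forall x, i <= x -> x + pp i j <= j -> a x = a (x + pp i j).
Proof.
move=> Hi Hij Hj x Hx Hxp.
set w := factor u i j.
have Hs := size_factor Hi Hij Hj.
have Hhas : has (is_period w) (iota 1 (size w)).
  apply/hasP; exists (size w); first by rewrite mem_iota Hs; lia.
  by rewrite /is_period Hs subnn /= andbT; lia.
have := nth_find 0 Hhas; rewrite nth_iota; last by have := Hhas; rewrite has_find size_iota.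
rewrite add1n -/(per w) -/(pp i j) /is_period => /andP [_ /allP H].
have := H (x.+1 - i); rewrite mem_iota Hs.
have Hr : (1 <= x.+1 - i < 1 + (j.+1 - i - pp i j)) by lia.
move=> /(_ Hr) /eqP.
rewrite !letter_factor //; try lia.
have E1 : (i + (x.+1 - i)) = x.+1 by lia.
have E2 : i + (x.+1 - i + pp i j) = (x + pp i j).+1 by lia.
by rewrite E1 E2.
Qed.

Lemma pp_min i j g : 1 <= i -> i <= j -> j <= size u -> 0 < g < pp i j ->
  (forall x, i <= x -> x + g <= j -> a x = a (x + g)) -> False.
Proof.
move=> Hi Hij Hj /andP [Hg0 Hg] Hper.
set w := factor u i j.
have Hs := size_factor Hi Hij Hj.
have Hlt : g.-1 < find (is_period w) (iota 1 (size w)).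
  by move: Hg; rewrite /pp /per /w -subn1; lia.
have := before_find 0 Hlt; rewrite nth_iota; last first.
  apply: (leq_trans Hlt); rewrite -{2}(size_iota 1 (size w)); exact: find_size.
rewrite add1n prednK // /is_period Hg0 /=.
move/negbT/negP; apply; apply/allP => t; rewrite mem_iota Hs => Ht.
rewrite !letter_factor //; try lia.
apply/eqP; have -> : (i + (t + g)).-1 = (i + t).-1 + g by lia.
apply: Hper; lia.
Qed.

End Word.

Section Core.
Variable T : finType.
Variable u : seq T.
Local Notation a := (a u).
Local Notation pp := (pp u).

Definition W k L := G (fun t => a (k + t)) L.
Definition R k L d := G (fun t => a (k + (d + t) %% L)) L.
Definition lyn o k L := all (fun d => lexlt (ltb o) (W k L) (R k L d)) (iota 1 L.-1).
Definition ord i j := key (a (j.+1 - pp i j)) < key (a j.+1).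
Definition inB i j k := [&& i < k, k + pp i j <= j.+1 & lyn (ord i j) k (pp i j)].

Lemma lynP o k L d : lyn o k L -> 0 < d < L -> lexlt (ltb o) (W k L) (R k L d).
Proof.
move=> /allP H Hd; apply: H; rewrite mem_iota; lia.
Qed.

Lemma run_facts i j : is_run u i j ->
  [/\ 0 < i, i <= j, j <= size u & 2 * pp i j <= j.+1 - i].
Proof. by case/and5P => H1 H2 H3 H4 /andP [H5 H6]; split. Qed.
Lemma run_left i j : is_run u i j -> (i == 1) || (a i.-1 != a (i + pp i j).-1).
Proof. by case/and5P => H1 H2 H3 H4 /andP [H5 H6]. Qed.
Lemma run_right i j : is_run u i j -> (j == size u) || (a (j.+1 - pp i j) != a j.+1).
Proof. by case/and5P => H1 H2 H3 H4 /andP [H5 H6]. Qed.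

Lemma border o k L b : lyn o k L -> 0 < b < L ->
  (forall t, t < b -> a (k + t) = a (k + (L - b) + t)) -> False.
Proof.
move=> Hl Hb Hbor.
have HbL : b <= L by lia.
have HbL' : L - b <= L by lia.
have E1 : W k L = W k b ++ W (k + b) (L - b).
  rewrite /W (G_split _ HbL); congr (_ ++ _); apply: G_ext => t Ht /=; by rewrite addnA.
have E2 : W k L = W k (L - b) ++ W k b.
  rewrite /W (G_split _ HbL'); congr (_ ++ _).
  have -> : L - (L - b) = b by lia.
  apply: G_ext => t Ht /=; by rewrite addnA -Hbor.
have E3 : R k L (L - b) = W k b ++ W k (L - b).
  rewrite /R /W (G_split _ HbL); congr (_ ++ _); apply: G_ext => t Ht /=.
    rewrite modn_small; last lia.
    by rewrite addnA -Hbor.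
  have -> : L - b + (b + t) = t + L by lia.
  by rewrite modnDr modn_small //; lia.
have E4 : R k L b = W (k + b) (L - b) ++ W k b.
  rewrite /R /W (G_split _ HbL'); have -> : L - (L - b) = b by lia.
  congr (_ ++ _); apply: G_ext => t Ht /=.
    by rewrite modn_small ?addnA //; lia.
  have -> : b + (L - b + t) = t + L by lia.
  by rewrite modnDr modn_small //; lia.
have Hd : 0 < L - b < L by lia.
have H1 := lynP Hl Hd.
have H2 := lynP Hl Hb.
rewrite E3 {1}E1 in H1.
rewrite E4 {1}E2 in H2.
apply: (no_border (@ltb_irr T o) (@ltb_asym T o) _ H1 H2).
by rewrite /W !size_G.
Qed.


Lemma nth_G (X : Type) (x0 : X) f L t : t < L -> nth x0 (G f L) t = f t.
Proof. by move=> Ht; rewrite /G (nth_map 0) ?size_iota // nth_iota. Qed.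

Lemma per_mult i j : 0 < i -> i <= j -> j <= size u ->
  forall q x, i <= x -> x + q * pp i j <= j -> a x = a (x + q * pp i j).
Proof.
move=> Hi Hij Hj; elim=> [|q IH] x Hx Hq; first by rewrite mul0n addn0.
have E : x + q.+1 * pp i j = (x + q * pp i j) + pp i j by rewrite mulSn; lia.
rewrite E in Hq *; rewrite -pp_period //; try lia; apply: IH; lia.
Qed.

Lemma cong i j x y : 0 < i -> i <= j -> j <= size u ->
  i <= x <= j -> i <= y <= j -> x = y %[mod pp i j] -> a x = a y.
Proof.
move=> Hi Hij Hj; wlog Hxy : x y / x <= y.
  move=> Hw Hx Hy E; case/orP: (leq_total x y) => H; first exact: Hw.
  by symmetry; apply: Hw.
move=> /andP [Hx1 Hx2] /andP [Hy1 Hy2] /eqP E.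
move: E; rewrite eq_sym eqn_mod_dvd // => /divnK E.
have -> : y = x + (y - x) %/ pp i j * pp i j by rewrite E; lia.
apply: per_mult => //; rewrite E; lia.
Qed.

Lemma modK k x p : 0 < p -> k + (x + p * k - k) %% p = x %[mod p].
Proof.
move=> Hp; rewrite modnDmr.
have Hk : k <= p * k by rewrite -{1}(mul1n k) leq_mul2r Hp orbT.
have -> : k + (x + p * k - k) = k * p + x by lia.
by rewrite modnMDl.
Qed.

Lemma mult_period (F : nat -> option T) e : (forall y, F (y + e) = F y) ->
  forall q y, F (y + q * e) = F y.
Proof.
move=> H; elim=> [|q IH] y; first by rewrite mul0n addn0.
have -> : y + q.+1 * e = (y + q * e) + e by rewrite mulSn; lia.
by rewrite H IH.
Qed.

Lemma gcd_period (F : nat -> option T) p d : 0 < p ->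
  (forall y, F (y + p) = F y) -> (forall y, F (y + d) = F y) ->
  forall y, F (y + gcdn p d) = F y.
Proof.
move=> Hp Hpp Hd y.
have [c _ /divnK Hc] := Bezoutl d Hp.
rewrite -(mult_period Hd c) -addnA -Hc.
exact: mult_period.
Qed.

Lemma prim i j k k' : 0 < i -> i <= j -> j <= size u ->
  i <= k -> k < k' -> k' < k + pp i j -> k' + pp i j <= j.+1 ->
  W k (pp i j) <> W k' (pp i j).
Proof.
move=> Hi Hij Hj Hk Hkk Hk' Hk'j E.
set p := pp i j in Hk' Hk'j E.
have Hp : 0 < p by [].
have EW : forall t, t < p -> a (k + t) = a (k' + t).
  move=> t Ht; have := congr1 (fun s => nth None s t) E.
  by rewrite /W /= !nth_G.
set d := k' - k.
pose F y := a (k + y %% p).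
have Fp : forall y, F (y + p) = F y by move=> y; rewrite /F modnDr.
have Fd : forall y, F (y + d) = F y.
  move=> y; rewrite /F.
  have Hm := ltn_pmod y Hp.
  have Hm' := ltn_pmod (y + d) Hp.
  rewrite (@cong i j (k + (y + d) %% p) (k' + y %% p)) //; try lia.
    by rewrite EW.
  by rewrite !modnDmr /d; congr modn; lia.
set g := gcdn p d.
have Hg0 : 0 < g by rewrite gcdn_gt0 Hp.
have Hgd : g <= d by apply: dvdn_leq; [rewrite /d; lia | exact: dvdn_gcdr].
have Fg := gcd_period Hp Fp Fd.
apply: (@pp_min T u i j g) => //; first by rewrite Hg0 /=; lia.
move=> x Hx Hxg.
have Hkp : k <= p * k by rewrite -{1}(mul1n k) leq_mul2r Hp orbT.
have Hm := ltn_pmod (x + p * k - k) Hp.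
have Hm' := ltn_pmod (x + g + p * k - k) Hp.
transitivity (F (x + p * k - k)).
  rewrite /F; apply: (@cong i j) => //; try lia.
  by rewrite modK.
rewrite -Fg /F; apply: (@cong i j) => //; try lia.
have -> : x + p * k - k + g = x + g + p * k - k by lia.
by rewrite modK.
Qed.

Lemma exists_min o (f : nat -> seq (option T)) L :
  (forall y, size (f y) = L) ->
  forall N, 0 < N -> exists x, x < N /\ forall y, y < N -> f x = f y \/ lexlt (ltb o) (f x) (f y).
Proof.
move=> Hs; elim=> [//|N IH] _.
case: N IH => [|N] IH.
  by exists 0; split=> // y; rewrite ltnS leqn0 => /eqP ->; left.
have [x [Hx Hmin]] := IH isT.
case: (eqVneq (f x) (f N.+1)) => [E|Ne].
  exists x; split; first lia.
  move=> y; rewrite ltnS leq_eqVlt => /orP [/eqP ->|]; [by left|exact: Hmin].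
case/orP: (lex_total (@ltb_irr T o) (@ltb_total T o) (etrans (Hs x) (esym (Hs N.+1))) Ne) => Hlt.
  exists x; split; first lia.
  move=> y; rewrite ltnS leq_eqVlt => /orP [/eqP ->|]; [by right|exact: Hmin].
exists N.+1; split=> // y; rewrite ltnS leq_eqVlt => /orP [/eqP ->|/Hmin [<-|H]]; [by left|by right|].
by right; apply: (lex_trans (@ltb_trans T o) Hlt H).
Qed.

Lemma window o i j m : 0 < i -> i <= j -> j <= size u -> i < m ->
  m + 2 * pp i j <= j.+2 -> exists x, x < pp i j /\ lyn o (m + x) (pp i j).
Proof.
move=> Hi Hij Hj Hm Hmj.
set p := pp i j in Hmj *.
have Hp : 0 < p by [].
pose f y := W (m + y) p.
have [x [Hx Hmin]] := @exists_min o f p (fun y => size_G _ _) p Hp.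
have rotW : forall y d, y < p -> R (m + y) p d = f ((y + d) %% p).
  move=> y d Hy; rewrite /R /f /W; apply: G_ext => t Ht.
  have H1 := ltn_pmod (d + t) Hp.
  have H2 := ltn_pmod (y + d) Hp.
  apply: (@cong i j) => //; try lia.
  have -> : m + (y + d) %% p + t = (m + t) + (y + d) %% p by lia.
  by rewrite !modnDmr; congr modn; lia.
exists x; split=> //.
apply/allP => d; rewrite mem_iota => Hd.
rewrite rotW //.
set y := (x + d) %% p.
have Hy : y < p by apply: ltn_pmod.
have Hyx : y != x.
  rewrite /y; case: (ltnP (x + d) p) => H.
    by rewrite modn_small //; apply/eqP; lia.
  have -> : x + d = (x + d - p) + p by lia.
  by rewrite modnDr modn_small; [apply/eqP; lia | lia].
have Hne : f x <> f y.
  rewrite /f; case: (ltnP x y) => H.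
    by apply: (@prim i j) => //; lia.
  by move=> E; symmetry in E; move: E; apply: (@prim i j) => //; lia.
by case: (Hmin y Hy).
Qed.

Lemma lex_head (X : eqType) (r : X -> X -> bool) f g L :
  lexlt r (G f L) (G g L) -> 0 < L -> f 0 != g 0 -> r (f 0) (g 0).
Proof.
case: L => // L; rewrite !G_S /= => /orP [//|/andP [/eqP E _]] _.
by rewrite E eqxx.
Qed.

Lemma ordP i j : is_run u i j -> j < size u ->
  ltb (ord i j) (a j.+1) (a (j.+1 - pp i j)).
Proof.
move=> Hr Hj; have := run_right Hr.
have -> : (j == size u) = false by apply/eqP; lia.
move=> /= Hne; rewrite /ltb /ord; case: ltnP => // H.
rewrite ltn_neqAle H andbT; apply: contra Hne => /eqP /key_inj ->; by [].
Qed.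

Lemma inB_facts i j k : inB i j k -> [/\ i < k, k + pp i j <= j.+1 & lyn (ord i j) k (pp i j)].
Proof. by case/and3P. Qed.

Lemma FL i j k : is_run u i j -> inB i j k -> 2 <= pp i j ->
  ltb (ord i j) (a k) (a (k - 1)).
Proof.
move=> Hr /inB_facts [Hk1 Hk2 Hl] Hp2.
have [Hi Hij Hj _] := run_facts Hr.
set p := pp i j in Hk2 Hl Hp2 *.
have Hne : a k != a (k + (p - 1)).
  apply/eqP => E; apply: (@border _ k p 1 Hl); first lia.
  move=> t Ht; have -> : t = 0 by lia.
  by rewrite !addn0 E.
have Hd : 0 < p - 1 < p by lia.
have := lex_head (lynP Hl Hd); rewrite /= !addn0 modn_small; last lia.
move=> /(_ (ltnW Hp2) Hne) H.
suff -> : a (k - 1) = a (k + (p - 1)) by [].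
have -> : k + (p - 1) = (k - 1) + p by lia.
apply: pp_period => //; lia.
Qed.

Lemma FL1 i j k : is_run u i j -> inB i j k -> pp i j = 1 -> a (k - 1) = a k.
Proof.
move=> Hr /inB_facts [Hk1 Hk2 Hl] Hp1.
have [Hi Hij Hj _] := run_facts Hr.
transitivity (a ((k - 1) + pp i j)); first by apply: pp_period => //; lia.
by congr a; lia.
Qed.

Lemma same_left i j i' j' k : is_run u i j -> is_run u i' j' -> pp i j = pp i' j' ->
  inB i j k -> inB i' j' k -> i <= i'.
Proof.
move=> Hr Hr' Ep /inB_facts [Hk1 Hk2 _] /inB_facts [Hk1' Hk2' _].
have [Hi Hij Hj _] := run_facts Hr.
have [Hi' Hij' Hj' _] := run_facts Hr'.
rewrite leqNgt; apply/negP => Hlt.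
have := run_left Hr.
have -> : (i == 1) = false by apply/eqP; lia.
rewrite /= Ep; move/eqP; apply.
have -> : (i + pp i' j').-1 = i.-1 + pp i' j' by rewrite -!subn1; lia.
apply: pp_period => //; rewrite -?subn1; lia.
Qed.

Lemma same_right i j i' j' k : is_run u i j -> is_run u i' j' -> pp i j = pp i' j' ->
  inB i j k -> inB i' j' k -> j <= j'.
Proof.
move=> Hr Hr' Ep /inB_facts [Hk1 Hk2 _] /inB_facts [Hk1' Hk2' _].
have [Hi Hij Hj _] := run_facts Hr.
have [Hi' Hij' Hj' _] := run_facts Hr'.
rewrite leqNgt; apply/negP => Hlt.
have := run_right Hr'.
have -> : (j' == size u) = false by apply/eqP; lia.
rewrite /= -Ep; move/eqP; apply.
transitivity (a ((j'.+1 - pp i j) + pp i j)); first by apply: pp_period => //; lia.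
by congr a; lia.
Qed.

Lemma P2 i j i' j' k : is_run u i j -> is_run u i' j' ->
  inB i j k -> inB i' j' k -> ord i j = ord i' j' -> pp i j < pp i' j' -> False.
Proof.
move=> Hr Hr' /inB_facts [Hk1 Hk2 Hl] /inB_facts [Hk1' Hk2' Hl'] Eo Hpp.
have [Hi Hij Hj _] := run_facts Hr.
have [Hi' Hij' Hj' _] := run_facts Hr'.
set p := pp i j in Hk2 Hl Hpp.
set p' := pp i' j' in Hk2' Hl' Hpp.
have Hp0 : 0 < p := pp_gt0 u i j.
case: (leqP (k + p') j.+1) => HA.
  apply: (@border _ k p' (p' - p) Hl'); first lia.
  move=> t Ht; have -> : p' - (p' - p) = p by lia.
  rewrite -addnA (addnC p) addnA; apply: pp_period => //; lia.
have Hlt := lynP Hl' (_ : 0 < p < p').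
have Hgt : lexlt (ltb (ord i' j')) (R k p' p) (W k p').
  apply: (@lex_G _ _ _ _ p' (j.+1 - k - p)) => //; first exact: ltb_irr; first lia.
    move=> t Ht /=; rewrite modn_small; last lia.
    rewrite (addnC p) addnA -pp_period //; lia.
  rewrite /= modn_small; last lia.
  have -> : k + (p + (j.+1 - k - p)) = j.+1 by lia.
  have -> : k + (j.+1 - k - p) = j.+1 - p by lia.
  rewrite -Eo; apply: ordP => //; lia.
by rewrite (lex_asym (@ltb_irr T _) (@ltb_asym T _) (Hlt _)) in Hgt; lia.
Qed.

Lemma uniqB i j i' j' k : is_run u i j -> is_run u i' j' ->
  inB i j k -> inB i' j' k -> i = i' /\ j = j'.
Proof.
move=> Hr Hr' HB HB'.
case: (eqVneq (pp i j) (pp i' j')) => Ep.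
  split; apply/eqP; rewrite eqn_leq.
    by rewrite (same_left Hr Hr' Ep HB HB') (same_left Hr' Hr (esym Ep) HB' HB).
  by rewrite (same_right Hr Hr' Ep HB HB') (same_right Hr' Hr (esym Ep) HB' HB).
exfalso.
case: (eqVneq (ord i j) (ord i' j')) => Eo.
  case: (ltngtP (pp i j) (pp i' j')) => H.
  - exact: (P2 Hr Hr' HB HB' Eo H).
  - exact: (P2 Hr' Hr HB' HB (esym Eo) H).
  - by rewrite H eqxx in Ep.
have Eo' : ord i' j' = ~~ ord i j by move: Eo; case: (ord i j); case: (ord i' j').
case: (leqP 2 (pp i j)) => H1; case: (leqP 2 (pp i' j')) => H2.
- have L1 := FL Hr HB H1; have L2 := FL Hr' HB' H2.
  rewrite Eo' ltb_flip in L2.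
  by rewrite (ltb_asym L1) in L2.
- have E := FL1 Hr' HB' (_ : pp i' j' = 1); have L1 := FL Hr HB H1.
  by rewrite -E ?ltb_irr in L1; have := pp_gt0 u i' j'; lia.
- have E := FL1 Hr HB (_ : pp i j = 1); have L2 := FL Hr' HB' H2.
  by rewrite -E ?ltb_irr in L2; have := pp_gt0 u i j; lia.
- have := pp_gt0 u i j; have := pp_gt0 u i' j'; lia.
Qed.

End Core.

Section Count.
Variable T : finType.
Variable u : seq T.
Local Notation n := (size u).

Definition Bset i j : {set 'I_n.+1} := [set k : 'I_n.+1 | inB u i j k].

Lemma countB i j : is_run u i j -> ((j.+1 - i) %/ pp u i j).-1 <= #|Bset i j|.
Proof.
move=> Hr; have [Hi Hij Hj H2p] := run_facts Hr.
set p := pp u i j in H2p *.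
have Hp : 0 < p := pp_gt0 u i j.
set q := (j.+1 - i) %/ p.
have Hq : q * p <= j.+1 - i by apply: leq_divM.
have ex : forall t : 'I_q.-1, exists k : 'I_n.+1, (k \in Bset i j) && ((k - i.+1) %/ p == t).
  move=> t; have Ht := ltn_ord t.
  have Htq : (t + 2) * p <= j.+1 - i.
    apply: leq_trans Hq; rewrite leq_mul2r; apply/orP; right; lia.
  have Hm1 : i < i.+1 + t * p by lia.
  have Hm2 : i.+1 + t * p + 2 * pp u i j <= j.+2 by rewrite -/p; lia.
  have [x [Hx Hl]] := @window T u (ord u i j) i j (i.+1 + t * p) Hi Hij Hj Hm1 Hm2.
  have Hk : i.+1 + t * p + x < n.+1 by lia.
  exists (Ordinal Hk); rewrite inE /inB /=; apply/andP; split.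
    rewrite Hl andbT; apply/andP; split; lia.
  have -> : i.+1 + t * p + x - i.+1 = t * p + x by lia.
  by rewrite divnMDl // divn_small // addn0.
pose f (t : 'I_q.-1) := odflt ord0 [pick k in Bset i j | (k - i.+1) %/ p == t].
have fP : forall t, (f t \in Bset i j) && ((f t - i.+1) %/ p == t).
  move=> t; rewrite /f; case: pickP => [k /andP [H1 H2] /=|H]; first by rewrite H1 H2.
  by have [k Hk] := ex t; move: (H k); rewrite Hk.
have finj : injective f.
  move=> t1 t2 E; apply/val_inj => /=.
  have /andP [_ /eqP <-] := fP t1; have /andP [_ /eqP <-] := fP t2; by rewrite E.
have <- : #|f @: [set: 'I_q.-1]| = q.-1 by rewrite card_imset // cardsT card_ord.
apply: subset_leq_card; apply/subsetP => k /imsetP [t _ ->].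
by have /andP [] := fP t.
Qed.

End Count.

Lemma card_sum (X : finType) (P : pred X) : #|[set x | P x]| = \sum_x (P x : nat).
Proof.
rewrite -sum1_card big_mkcond /=; apply: eq_bigr => x _; rewrite inE; by case: (P x).
Qed.

Lemma exp_bound (T : finType) (u : seq T) i j : is_run u i j ->
  (run_exponent u i j <= (3 * #|Bset u i j|)%:R :> rat)%R.
Proof.
move=> Hr; have [Hi Hij Hj H2p] := run_facts Hr.
have Hc := countB Hr.
rewrite /run_exponent -/(pp u i j).
have Hp : 0 < pp u i j := pp_gt0 u i j.
rewrite ler_pdivrMr ?ltr0n // -natrM ler_nat.
set p := pp u i j in Hc H2p Hp *.
set L := j.+1 - i in Hc H2p *.
set B := #|Bset u i j| in Hc *.
have Hq2 : 2 <= L %/ p by rewrite leq_divRL // mulnC.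
have Hlt := ltn_ceil L Hp.
have HqB : (L %/ p).+1 <= 3 * B by lia.
apply: (leq_trans (ltnW Hlt)); by rewrite leq_mul2r HqB orbT.
Qed.

Lemma sumB_bound (T : finType) (u : seq T) :
  \sum_(i < (size u).+1) \sum_(j < (size u).+1 | is_run u i j) #|Bset u i j| <= size u.
Proof.
set N := size u.
under eq_bigr => i _ do under eq_bigr => j _ do rewrite /Bset card_sum.
rewrite (eq_bigr (fun i : 'I_N.+1 => \sum_(k < N.+1) \sum_(j < N.+1 | is_run u i j) (inB u i j k : nat))); last first.
  by move=> i _; rewrite exchange_big.
rewrite exchange_big /=.
apply: (@leq_trans (\sum_(k < N.+1) (0 < k : nat))).
  apply: leq_sum => k _.
  case: (posnP k) => [Hk0|Hk].
    rewrite Hk0 /= leqn0; apply/eqP.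
    apply: big1 => i _; apply: big1 => j _.
    by [].
  rewrite (eq_bigr (fun i : 'I_N.+1 => \sum_(j < N.+1) ((is_run u i j && inB u i j k) : nat))); last first.
    move=> i _; rewrite big_mkcond /=; apply: eq_bigr => j _; by case: (is_run u i j).
  rewrite pair_big /=.
  rewrite -(card_sum (fun x : 'I_N.+1 * 'I_N.+1 => is_run u x.1 x.2 && inB u x.1 x.2 k)).
  apply/card_le1_eqP => [[i1 j1]] [i2 j2]; rewrite !inE /= => /andP [Hr1 HB1] /andP [Hr2 HB2].
  have [E1 E2] := uniqB Hr1 Hr2 HB1 HB2.
  by congr pair; apply: val_inj.
rewrite big_ord_recl /= add0n.
by rewrite sum_nat_const card_ord muln1.
Qed.

End Helpers.
Import Helpers.
Local Open Scope ring_scope.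
Theorem theorem2 (T : finType) (n : nat) (u : seq T) :
  (0 < n)%N -> size u = n ->
  sum_exponents u < (41%:R / 10%:R) * n%:R.
Proof.
move=> Hn Hs.
have H1 : sum_exponents u <= 3 * (size u)%:R.
  apply: (@le_trans _ _ ((3 * \sum_(i < (size u).+1) \sum_(j < (size u).+1 | is_run u i j) #|Bset u i j|)%N)%:R).
    rewrite /sum_exponents natrM natr_sum mulr_sumr.
    apply: ler_sum => i _.
    rewrite natr_sum mulr_sumr; apply: ler_sum => j Hr.
    by rewrite -natrM; apply: exp_bound.
  by rewrite natrM ler_pM2l ?ltr0n // ler_nat sumB_bound.
have Hn' : (0 : rat) < n%:R by rewrite ltr0n.
rewrite Hs in H1.
apply: (le_lt_trans H1); lra.
Qed.
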